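(* Let $b^{(1)},b^{(2)}\in Diag((\hbar))$ be constant. On families of pairwise commuting operators $L_\alpha=\partial/\partial x^\alpha-\hbar^{-1}C_\alpha(x)$, $\alpha=1,\dots,n$, admitting a dressing transformation $T$, consider the two flows $$\frac{\partial L_\alpha}{\partial t^i}=[M^{(i)}_{\le-1},L_\alpha],\qquad M^{(i)}=Tb^{(i)}T^{-1},\quad i=1,2.$$ These flows commute: computing mixed second derivatives by means of these equations, $\frac{\partial}{\partial t^1}\frac{\partial L_\alpha}{\partial t^2}=\frac{\partial}{\partial t^2}\frac{\partial L_\alpha}{\partial t^1}$ for all $\alpha$.
   Context: $C_\alpha$: $Mat(n,\mathbb C)$-valued analytic functions of $x$; $Diag$: diagonal matrices; $Diag((\hbar))$: formal Laurent series in $\hbar$ with diagonal coefficients. A dressing transformation is an invertible $T\in Mat(n,\mathbb C)[[\hbar]]$ with $T^{-1}L_\alpha T=\partial/\partial x^\alpha+h_\alpha$, $h_\alpha\in\hbar^{-1}Diag[[\hbar]]$ for all $\alpha$; it is assumed that the leading terms of $h_\alpha$ span $Diag$ (as in the semisimple Frobenius manifold setting), so $T$ is unique up to right multiplication by diagonal series and $M^{(i)}$ is well defined. For $v=\sum_lv_l\hbar^l$, $v_{\le k}=\sum_{l\le k}v_l\hbar^l$. $[\partial+A,M]=\partial M+[A,M]$; $\partial L_\alpha/\partial t$ means $-\hbar^{-1}\partial C_\alpha/\partial t$. In computing $\partial_{t^1}\partial_{t^2}L_\alpha$ one differentiates $[M^{(2)}_{\le-1},L_\alpha]$ along the $t^1$-flow,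 including the induced variation of $M^{(2)}$. *)

(* Defs.v *)
(* Formal Laurent series in hbar with coefficients in
   n x n matrices over a commutative differential ring A. *)
From HB Require Import structures.
From mathcomp Require Import all_boot all_order all_algebra.
From mathcomp Require Import zify.
Set Implicit Arguments. Unset Strict Implicit. Unset Printing Implicit Defensive.
Import Order.TTheory GRing.Theory Num.Theory.
Local Open Scope ring_scope.

Section Laurent.
Variables (A : comPzRingType) (n : nat).

(* sum_k lc k hbar^k, with lc k = 0 for k < lv *)
Record lser := LSer {
  lc :> int -> 'M[A]_n ;
  lv : int ;
  lvP : forall k : int, k < lv -> lc k = 0 }.

Definition lmono (k0 : int) (c : 'M[A]_n) : lser.
Proof. refine (@LSer (fun k => if k == k0 then c else 0) k0 _).
move=> k hk; case: eqP => [ek|//]; by rewrite ek ltxx in hk. Defined.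

Definition lone : lser := lmono 0 1%:M.

Definition ladd (f g : lser) : lser.
Proof. refine (@LSer (fun k => f k + g k) (Order.min (lv f) (lv g)) _).
move=> k; rewrite lt_min => /andP[hf hg]; by rewrite !lvP ?addr0. Defined.

Definition lopp (f : lser) : lser.
Proof. refine (@LSer (fun k => - f k) (lv f) _).
move=> k hk; by rewrite lvP ?oppr0. Defined.

Definition lsub (f g : lser) : lser := ladd f (lopp g).

Definition lmul (f g : lser) : lser.
Proof. refine (@LSer (fun k => \sum_(i < (absz (k - lv f - lv g)%R).+1)
                  f (lv f + i%:Z) *m g (k - (lv f + i%:Z))) (lv f + lv g) _).
move=> k hk; apply: big1 => i _.
rewrite (@lvP g) ?mulmx0 //; lia. Defined.

Definition lbr (f g : lser) : lser := lsub (lmul f g) (lmul g f).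

Definition ltrunc (f : lser) : lser.
Proof. refine (@LSer (fun k => if k <= -1 then f k else 0) (lv f) _).
move=> k hk; case: ifP => // _; exact: lvP. Defined.

Definition ldiff (d : {additive A -> A}) (f : lser) : lser.
Proof. refine (@LSer (fun k => map_mx d (f k)) (lv f) _).
move=> k hk; rewrite lvP //; apply/matrixP => i j; by rewrite !mxE raddf0. Defined.

Definition lseq (f g : lser) : Prop := forall k, f k = g k.

(* [Y, d_alpha + X]  (operator commutator, Y a multiplication operator) *)
Definition opbr (d : {additive A -> A}) (Y X : lser) : lser :=
  lsub (lbr Y X) (ldiff d Y).

(* [d_a + X, d_b + Y] = d_a Y - d_b X + [X, Y] (a multiplication operator) *)
Definition opcomm (da db : {additive A -> A}) (X Y : lser) : lser :=
  ladd (lsub (ldiff da Y) (ldiff db X)) (lbr X Y).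

(* T^{-1} (d + X) T = d + opconj d T Tinv X *)
Definition opconj (d : {additive A -> A}) (T Tinv X : lser) : lser :=
  ladd (lmul Tinv (ldiff d T)) (lmul (lmul Tinv X) T).

End Laurent.

Definition derivation (A : comPzRingType) (d : {additive A -> A}) : Prop :=
  forall a b : A, d (a * b) = d a * b + a * d b.

(* potential part of L_alpha = d_alpha - hbar^{-1} C_alpha *)
Definition Lpot (A : comPzRingType) (n : nat) (C : 'M[A]_n) : lser A n :=
  lmono (-1) (- C).

(* T is a dressing transformation for the family L_alpha = d_alpha - hbar^{-1} C_alpha:
   T, Tinv in Mat[[hbar]], mutually inverse, T^{-1} L_alpha T = d_alpha + h_alpha with
   h_alpha in hbar^{-1} Diag[[hbar]], and the leading terms of the h_alpha span Diag. *)
Definition dressing (A : comPzRingType) (n : nat) (dx : 'I_n -> {additive A -> A})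
  (C : 'I_n -> 'M[A]_n) (T Tinv : lser A n) : Prop :=
  (forall k : int, k < 0 -> T k = 0) /\ (forall k : int, k < 0 -> Tinv k = 0) /\
  lseq (lmul T Tinv) (lone A n) /\ lseq (lmul Tinv T) (lone A n) /\
  exists h : 'I_n -> lser A n,
    (forall a, lseq (opconj (dx a) T Tinv (Lpot (C a))) (h a)) /\
    (forall a k, is_diag_mx (h a k)) /\
    (forall a (k : int), k < -1 -> h a k = 0) /\
    (forall d : 'M[A]_n, is_diag_mx d ->
       exists c : 'I_n -> A, d = \sum_(a < n) c a *: h a (-1)).

(* Main.v *)
Require Import Defs.
From HB Require Import structures.
From mathcomp Require Import all_boot all_order all_algebra.
From mathcomp Require Import zify.
From mathcomp.classical Require Import boolp.
Set Implicit Arguments. Unset Strict Implicit. Unset Printing Implicit Defensive.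
Import Order.TTheory GRing.Theory Num.Theory.
Local Open Scope ring_scope.

Section ISum.
Variable V : zmodType.
Implicit Types (u v : int -> V) (a c : int) (N M : nat).

Definition isum u a N : V := \sum_(j < N) u (a + j%:Z).
Definition supp_in u a N := forall m : int, (m < a) \/ (a + N%:Z <= m) -> u m = 0.

Lemma isum_ext u a N c M : supp_in u a N -> c <= a -> a + N%:Z <= c + M%:Z ->
  isum u c M = isum u a N.
Proof.
move=> hs hca hM; rewrite /isum.
pose d := absz (a - c)%R.
have hd : c + d%:Z = a by rewrite /d; lia.
have hdM : (d + N <= M)%N by rewrite /d; lia.
have eM : M = (d + (N + (M - (d + N))))%N by lia.
rewrite eM big_split_ord /= big1 ?add0r; last first.
  move=> j _; apply: hs; left; have := ltn_ord j; rewrite /=; lia.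
rewrite big_split_ord /= [X in _ + X]big1 ?addr0.
  by apply: eq_bigr => j _; congr u; rewrite -hd; lia.
move=> j _; apply: hs; right; lia.
Qed.

Lemma isum_win u a N a' N' : supp_in u a N -> supp_in u a' N' ->
  isum u a N = isum u a' N'.
Proof.
move=> h1 h2.
pose c := Order.min a a'.
pose M := absz (Order.max (a + N%:Z) (a' + N'%:Z) - c)%R.
rewrite -(@isum_ext u a N c M) //; last 2 first.
- by rewrite /c ge_min lexx.
- rewrite /M /c; lia.
rewrite (@isum_ext u a' N' c M) //.
- by rewrite /c ge_min lexx orbT.
- rewrite /M /c; lia.
Qed.

Lemma isumD u v a N : isum (fun m => u m + v m) a N = isum u a N + isum v a N.
Proof. by rewrite /isum big_split. Qed.

Lemma isumN u a N : isum (fun m => - u m) a N = - isum u a N.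
Proof. by rewrite /isum sumrN. Qed.

Lemma isum_eq u v a N : (forall m, u m = v m) -> isum u a N = isum v a N.
Proof. by move=> h; apply: eq_bigr => j _; rewrite h. Qed.

Lemma isum0 u a N : (forall m, u m = 0) -> isum u a N = 0.
Proof. by move=> h; apply: big1 => j _; rewrite h. Qed.

Lemma isum_single u a N m0 : supp_in u a N -> (forall m, m != m0 -> u m = 0) ->
  isum u a N = u m0.
Proof.
move=> hs h.
case: (boolP ((a <= m0) && (m0 < a + N%:Z))) => [/andP[h1 h2]|hn].
  have hj : (absz (m0 - a)%R < N)%N by lia.
  rewrite /isum (bigD1 (Ordinal hj)) //= big1 ?addr0.
    by congr u; lia.
  move=> j hj'; apply: h; apply/negP => /eqP e; move/eqP: hj'; apply.
  apply: val_inj => /=; lia.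
rewrite isum0 ?hs //; first by lia.
move=> m; case: (eqVneq m m0) => [->|/h //]; apply: hs; lia.
Qed.

End ISum.

Section ZE.
Variable V : zmodType.
Inductive zex := ZAt of nat | Z0 | ZAdd of zex & zex | ZOpp of zex.
Fixpoint zev (env : seq V) e := match e with
  | ZAt i => nth 0 env i | Z0 => 0 | ZAdd a b => zev env a + zev env b
  | ZOpp a => - zev env a end.
Fixpoint zco e (i : nat) : int := match e with
  | ZAt j => if i == j then 1 else 0 | Z0 => 0 | ZAdd a b => zco a i + zco b i
  | ZOpp a => - zco a i end.
Lemma zev_sum env e : zev env e = \sum_(i < size env) nth 0 env i *~ zco e i.
Proof.
elim: e => [j||a iha b ihb|a iha] /=.
- case: (ltnP j (size env)) => h.
    rewrite (bigD1 (Ordinal h)) //= eqxx big1 ?addr0 //.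
    by move=> i /eqP hi; case: eqP => // e; case: hi; apply: val_inj.
  rewrite nth_default // big1 // => i _; case: eqP => // e.
  by have := ltn_ord i; rewrite e ltnNge h.
- by rewrite big1.
- by rewrite iha ihb -big_split; apply: eq_bigr => i _; rewrite mulrzDr.
- by rewrite iha -sumrN; apply: eq_bigr => i _; rewrite mulrNz.
Qed.
Lemma zsolve_ok env e1 e2 : all (fun i => zco e1 i == zco e2 i) (iota 0 (size env)) ->
  zev env e1 = zev env e2.
Proof.
move=> /allP h; rewrite !zev_sum; apply: eq_bigr => i _.
by rewrite (eqP (h _ _)) // mem_iota /= add0n.
Qed.
End ZE.

Ltac zmem x l := lazymatch l with
  | nil => constr:(false)
  | cons ?y ?l' => match tt with
                   | _ => let _ := match tt with _ => unify x y end in constr:(true)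
                   | _ => zmem x l' end
  end.
Ltac zidx x l := lazymatch l with
  | cons ?y ?l' => match tt with
                   | _ => let _ := match tt with _ => unify x y end in constr:(O)
                   | _ => let k := zidx x l' in constr:(S k) end
  end.
Ltac zcol t l := lazymatch t with
  | GRing.add ?a ?b => let l := zcol a l in zcol b l
  | GRing.opp ?a => zcol a l
  | GRing.zero => l
  | _ => let b := zmem t l in lazymatch b with true => l | false => constr:(cons t l) end
  end.
Ltac zrei t l := lazymatch t with
  | GRing.add ?a ?b => let x := zrei a l in let y := zrei b l in constr:(ZAdd x y)
  | GRing.opp ?a => let x := zrei a l in constr:(ZOpp x)
  | GRing.zero => constr:(Z0)
  | _ => let k := zidx t l in constr:(ZAt k)
  end.
Ltac zsolve := lazymatch goal with |- @eq ?V ?a ?b =>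
  let l := zcol a (@nil V) in let l := zcol b l in
  let ea := zrei a l in let eb := zrei b l in
  change (zev l ea = zev l eb); apply: zsolve_ok; vm_compute; reflexivity end.

Goal forall (V : zmodType) (a b p q r w : V), a + p + q = b + r + w -> (a+p) - (b+w) - (b+r) + (a+q) = a - b.
move=> V a b p q r w h.
have -> : a + q = (b + r + w) - p by rewrite -h; zsolve.
zsolve.
Qed.

Definition bbelow (A : comPzRingType) n (f : int -> 'M[A]_n) :=
  exists L : int, forall k, k < L -> f k = 0.
Record ser (A : comPzRingType) (n : nat) := Ser { sv :> int -> 'M[A]_n; svP : bbelow sv }.
HB.instance Definition _ A n := gen_eqMixin (ser A n).
HB.instance Definition _ A n := gen_choiceMixin (ser A n).

Section Ser.
Variables (A : comPzRingType) (n : nat).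
Local Notation S := (ser A n).
Implicit Types (s t u : S).

Lemma ser_ext s t : (forall k, s k = t k) -> s = t.
Proof.
case: s t => f hf [g hg] /= h.
have e : f = g by apply: funext.
subst g; congr Ser; exact: Prop_irrelevance.
Qed.

Definition lb s : int := projT1 (cid (svP s)).
Lemma lbP s m : m < lb s -> s m = 0.
Proof. rewrite /lb; case: (cid _) => L hL /=; exact: hL. Qed.

Definition szero : S.
Proof. refine (@Ser _ _ (fun _ => 0) _); by exists 0. Defined.
Definition sopp s : S.
Proof. refine (@Ser _ _ (fun k => - s k) _); exists (lb s) => k hk; by rewrite lbP ?oppr0. Defined.
Definition sadd s t : S.
Proof. refine (@Ser _ _ (fun k => s k + t k) _); exists (Order.min (lb s) (lb t)) => k.
rewrite lt_min => /andP[h1 h2]; by rewrite !lbP ?addr0. Defined.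

Lemma saddA : associative sadd.
Proof. by move=> s t u; apply: ser_ext => k /=; rewrite addrA. Qed.
Lemma saddC : commutative sadd.
Proof. by move=> s t; apply: ser_ext => k /=; rewrite addrC. Qed.
Lemma sadd0 : left_id szero sadd.
Proof. by move=> s; apply: ser_ext => k /=; rewrite add0r. Qed.
Lemma saddN : left_inverse szero sopp sadd.
Proof. by move=> s; apply: ser_ext => k /=; rewrite addNr. Qed.

Definition cmul s t (k : int) := fun m => s m *m t (k - m).

Definition smul s t : S.
Proof.
refine (@Ser _ _ (fun k => isum (cmul s t k) (lb s) (absz (k - lb s - lb t)%R).+1) _).
exists (lb s + lb t) => k hk; apply: isum0 => m; rewrite /cmul.
case: (ltP m (lb s)) => h; first by rewrite lbP ?mul0mx.
by rewrite (@lbP t) ?mulmx0 //; lia.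
Defined.

Lemma supp_cmul s t k a N : (forall m, m < a -> s m = 0) ->
  (forall m, a + N%:Z <= m -> t (k - m) = 0) -> supp_in (cmul s t k) a N.
Proof. by move=> h1 h2 m [h|h]; rewrite /cmul; [rewrite h1 ?mul0mx | rewrite h2 ?mulmx0]. Qed.

Lemma smulE s t k a N : (forall m, m < a -> s m = 0) ->
  (forall m, a + N%:Z <= m -> t (k - m) = 0) -> smul s t k = isum (cmul s t k) a N.
Proof.
move=> h1 h2; rewrite /=; apply: isum_win; last exact: supp_cmul.
apply: supp_cmul; first exact: lbP.
by move=> m hm; apply: lbP; lia.
Qed.

Lemma smulW s t k a b : (forall m, m < a -> s m = 0) -> (forall m, m < b -> t m = 0) ->
  smul s t k = isum (cmul s t k) a (absz (k - a - b)%R).+1.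
Proof. by move=> h1 h2; apply: smulE => // m hm; apply: h2; lia. Qed.

Lemma smul_lb s t a b m : (forall m, m < a -> s m = 0) -> (forall m, m < b -> t m = 0) ->
  m < a + b -> smul s t m = 0.
Proof.
move=> h1 h2 hm; rewrite (smulW m h1 h2); apply: isum0 => i; rewrite /cmul.
case: (ltP i a) => h; first by rewrite h1 ?mul0mx.
by rewrite h2 ?mulmx0 //; lia.
Qed.

Lemma smulA : associative smul.
Proof.
move=> s t u; apply: ser_ext => k; symmetry.
set ls := lb s; set lt := lb t; set lu := lb u.
set N1 := (absz (k - ls - lt - lu)%R).+1.
pose W (i : nat) (p : int) := s (ls + i%:Z) *m t (p - (ls + i%:Z)) *m u (k - p).
have hst : forall m, m < ls + lt -> smul s t m = 0 by move=> m; apply: smul_lb; apply: lbP.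
have htu : forall m, m < lt + lu -> smul t u m = 0 by move=> m; apply: smul_lb; apply: lbP.
rewrite (smulE (N := N1) hst); last by move=> m hm; apply: lbP; rewrite /N1; lia.
rewrite (smulE (N := N1) (@lbP s)); last by move=> m hm; apply: htu; rewrite /N1; lia.
transitivity (\sum_(i < N1) isum (W i) (ls + lt) N1).
  rewrite /isum /cmul exchange_big; apply: eq_bigr => j _.
  rewrite (smulE (N := N1) (@lbP s)); last first.
    by move=> m hm; apply: lbP; have := ltn_ord j; rewrite /N1; lia.
  rewrite /isum /cmul mulmx_suml; apply: eq_bigr => i _.
  by rewrite /W; congr (s _ *m t _ *m u _); lia.
rewrite /isum; apply: eq_bigr => i _.
rewrite /cmul (smulE (N := N1) (@lbP t)); last first.
  by move=> m hm; apply: lbP; rewrite /N1; lia.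
rewrite /isum /cmul mulmx_sumr.
have -> : \sum_(i0 < N1) s (ls + i) *m (t (lt + i0) *m u (k - (ls + i) - (lt + i0)))
   = isum (W i) (ls + i%:Z + lt) N1.
  rewrite /isum; apply: eq_bigr => j _; rewrite /W mulmxA.
  by congr (s _ *m t _ *m u _); lia.
have hsupp : forall a N, a <= ls + i%:Z + lt -> k - lu < a + N%:Z -> supp_in (W i) a N.
  move=> a N h1 h2 m [h|h]; rewrite /W.
    by rewrite (@lbP t) ?mulmx0 ?mul0mx //; lia.
  by rewrite (@lbP u) ?mulmx0 //; lia.
apply: isum_win; apply: hsupp; rewrite /N1; lia.
Qed.

Lemma smulW_supp s t k a b : (forall m, m < a -> s m = 0) -> (forall m, m < b -> t m = 0) ->
  supp_in (cmul s t k) a (absz (k - a - b)%R).+1.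
Proof. by move=> h1 h2; apply: supp_cmul => // m hm; apply: h2; lia. Qed.

Definition sone : S.
Proof. refine (@Ser _ _ (fun k => if k == 0 then 1%:M else 0) _); exists 0 => k hk.
by case: eqP => // e; rewrite e ltxx in hk. Defined.

Lemma sone_lb m : m < 0 -> sone m = 0.
Proof. by move=> hm /=; case: eqP => // e; rewrite e ltxx in hm. Qed.

Lemma smul1 : left_id sone smul.
Proof.
move=> s; apply: ser_ext => k.
rewrite (smulW k sone_lb (@lbP s)) (isum_single (m0 := 0)).
- by rewrite /cmul /= ?eqxx mul1mx subr0.
- exact: smulW_supp sone_lb (@lbP s).
- by move=> m hm; rewrite /cmul /= (negPf hm) mul0mx.
Qed.

Lemma smulr1 : right_id sone smul.
Proof.
move=> s; apply: ser_ext => k.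
rewrite (smulW k (@lbP s) sone_lb) (isum_single (m0 := k)).
- by rewrite /cmul /= subrr ?eqxx mulmx1.
- exact: smulW_supp (@lbP s) sone_lb.
- move=> m hm; rewrite /cmul /=; case: eqP; last by rewrite mulmx0.
  by move=> e; move/eqP: hm; case; lia.
Qed.

Lemma sadd_lb s t a : (forall m, m < a -> s m = 0) -> (forall m, m < a -> t m = 0) ->
  forall m, m < a -> sadd s t m = 0.
Proof. by move=> h1 h2 m hm /=; rewrite h1 // h2 // addr0. Qed.
Lemma saddE0 s t k : sadd s t k = s k + t k. Proof. by []. Qed.

Lemma smulDl : left_distributive smul sadd.
Proof.
move=> s1 s2 t; apply: ser_ext => k.
set a := Order.min (lb s1) (lb s2).
have h1 : forall m, m < a -> s1 m = 0 by move=> m hm; apply: lbP; move: hm; rewrite lt_min => /andP[].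
have h2 : forall m, m < a -> s2 m = 0 by move=> m hm; apply: lbP; move: hm; rewrite lt_min => /andP[].
rewrite saddE0 (smulW k (sadd_lb h1 h2) (@lbP t)) (smulW k h1 (@lbP t)) (smulW k h2 (@lbP t)).
by rewrite -isumD; apply: isum_eq => m; rewrite /cmul /= mulmxDl.
Qed.

Lemma smulDr : right_distributive smul sadd.
Proof.
move=> s t1 t2; apply: ser_ext => k.
set a := Order.min (lb t1) (lb t2).
have h1 : forall m, m < a -> t1 m = 0 by move=> m hm; apply: lbP; move: hm; rewrite lt_min => /andP[].
have h2 : forall m, m < a -> t2 m = 0 by move=> m hm; apply: lbP; move: hm; rewrite lt_min => /andP[].
rewrite saddE0 (smulW k (@lbP s) (sadd_lb h1 h2)) (smulW k (@lbP s) h1) (smulW k (@lbP s) h2).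
by rewrite -isumD; apply: isum_eq => m; rewrite /cmul /= mulmxDr.
Qed.
End Ser.

HB.instance Definition _ A n := GRing.isZmodule.Build (ser A n)
  (@saddA A n) (@saddC A n) (@sadd0 A n) (@saddN A n).
HB.instance Definition _ A n := GRing.Zmodule_isPzRing.Build (ser A n)
  (@smulA A n) (@smul1 A n) (@smulr1 A n) (@smulDl A n) (@smulDr A n).



Ltac rexp := rewrite ?(mulrDl, mulrDr, mulrBl, mulrBr, mulNr, mulrN, opprK, opprD, opprB,
   mulrA, mul1r, mulr1, mul0r, mulr0, addr0, add0r, oppr0).

Section Alg.
Variable R : pzRingType.
Definition br (x y : R) := x * y - y * x.

Definition isder (D : {additive R -> R}) := forall x y, D (x * y) = D x * y + x * D y.

Lemma der1 (D : {additive R -> R}) : isder D -> D 1 = 0.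
Proof.
move=> hD; have := hD 1 1; rewrite !mulr1 !mul1r => h.
have h' : D 1 + D 1 = D 1 + 0 by rewrite addr0 -h.
exact: addrI h'.
Qed.

Lemma Dbr (D : {additive R -> R}) x y : isder D -> D (br x y) = br (D x) y + br x (D y).
Proof. by move=> hD; rewrite /br raddfB !hD; zsolve. Qed.

Section Inv.
Variables (T Ti : R) (hTTi : T * Ti = 1) (hTiT : Ti * T = 1).
Lemma cTTi x : x * T * Ti = x. Proof. by rewrite -mulrA hTTi mulr1. Qed.
Lemma cTiT x : x * Ti * T = x. Proof. by rewrite -mulrA hTiT mulr1. Qed.

Lemma DTi (D : {additive R -> R}) : isder D -> D Ti = - (Ti * D T) * Ti.
Proof.
move=> hD.
have h0 : D Ti * T + Ti * D T = 0 by rewrite -hD hTiT der1.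
have h1 : D Ti * T = - (Ti * D T) by apply/eqP; rewrite -addr_eq0 h0.
by rewrite -h1 cTTi.
Qed.

Lemma Dconj (D : {additive R -> R}) x : isder D ->
  D (Ti * x * T) = Ti * D x * T + br (Ti * x * T) (Ti * D T).
Proof.
move=> hD; rewrite !hD (DTi hD) /br; rexp.
rewrite ?cTTi; zsolve.
Qed.

Lemma DG (D E : {additive R -> R}) : isder D -> isder E -> (forall x, D (E x) = E (D x)) ->
  D (Ti * E T) = br (Ti * E T) (Ti * D T) + E (Ti * D T).
Proof.
move=> hD hE hDE.
have eT : D T = T * (Ti * D T) by rewrite mulrA hTTi mul1r.
rewrite hD hDE [in E (D T)]eT hE (DTi hD) /br; rexp.
rewrite hTiT mul1r; zsolve.
Qed.

Lemma conj_main (D E : {additive R -> R}) (X N : R) : isder D -> isder E ->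
  (forall x, D (E x) = E (D x)) -> D X = br N X - E N ->
  D (Ti * E T + Ti * X * T) =
  br (Ti * E T + Ti * X * T) (Ti * D T - Ti * N * T) + E (Ti * D T - Ti * N * T).
Proof.
move=> hD hE hDE hX.
have hc : Ti * E N * T = E (Ti * N * T) - br (Ti * N * T) (Ti * E T).
  by rewrite (Dconj N hE); zsolve.
rewrite raddfD (DG hD hE hDE) (Dconj X hD) hX.
have -> : Ti * (br N X - E N) * T = Ti * br N X * T - Ti * E N * T.
  by rewrite mulrBr mulrBl.
rewrite hc !(raddfB E) /br; rexp; rewrite ?cTTi; zsolve.
Qed.

Lemma step2 (D : {additive R -> R}) (b N : R) : isder D -> D b = 0 ->
  (Ti * D T - Ti * N * T) * b = b * (Ti * D T - Ti * N * T) ->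
  D (T * b * Ti) = br N (T * b * Ti).
Proof.
move=> hD hb hZ.
set Z := Ti * D T - Ti * N * T in hZ *.
have eT : D T = T * Z + N * T.
  by rewrite /Z mulrBr !mulrA hTTi !mul1r subrK.
have eW : Ti * D T = Z + Ti * N * T by rewrite /Z subrK.
rewrite !hD hb (DTi hD) eW eT; clearbody Z.
rewrite /br; rexp.
rewrite -(mulrA T Z b) hZ; rexp; rewrite ?cTTi ?cTiT ?hTTi ?mul1r; zsolve.
Qed.
End Inv.

Lemma step3 (D1 D2 E : {additive R -> R}) (X N1 N2 : R) :
  isder D1 -> isder D2 -> isder E ->
  (forall x, D1 (E x) = E (D1 x)) -> (forall x, D2 (E x) = E (D2 x)) ->
  D1 X = br N1 X - E N1 -> D2 X = br N2 X - E N2 ->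
  D2 N1 = D1 N2 + br N2 N1 ->
  D2 (D1 X) = D1 (D2 X).
Proof.
move=> h1 h2 hE h1E h2E hX1 hX2 hK.
rewrite hX1 hX2 (raddfB D2) (raddfB D1) (Dbr _ _ h1) (Dbr _ _ h2) hX1 hX2 h1E h2E hK (raddfD E) (Dbr _ _ hE) /br; rexp; zsolve.
Qed.

Lemma keyK (P : {additive R -> R}) (N1 N2 Q1 Q2 : R) :
  (N1 + Q1) * (N2 + Q2) = (N2 + Q2) * (N1 + Q1) ->
  P (N1 * N2) = N1 * N2 -> P (N2 * N1) = N2 * N1 ->
  P (Q1 * Q2) = 0 -> P (Q2 * Q1) = 0 ->
  P (br N2 (N1 + Q1)) = P (br N1 (N2 + Q2)) + br N2 N1.
Proof.
move=> hc h12 h21 hq12 hq21.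
have : P ((N1 + Q1) * (N2 + Q2) - (N2 + Q2) * (N1 + Q1)) = 0 by rewrite hc subrr raddf0.
rewrite /br; rexp; rewrite !raddfD !raddfN h12 h21 hq12 hq21 => h.
have e : P (N1 * Q2) = - (N1 * N2 + P (Q1 * N2) - N2 * N1 - P (N2 * Q1) - P (Q2 * N1)).
  apply/eqP; rewrite -addr_eq0; apply/eqP; rewrite -h; zsolve.
rewrite e; zsolve.
Qed.
End Alg.

Section Mx.
Variables (A : comPzRingType) (n : nat) (d : {additive A -> A}).
Lemma mxd0 : map_mx d (0 : 'M[A]_n) = 0.
Proof. by apply/matrixP => i j; rewrite !mxE raddf0. Qed.
Lemma mxdB (x y : 'M[A]_n) : map_mx d (x - y) = map_mx d x - map_mx d y.
Proof. by apply/matrixP => i j; rewrite !mxE raddfB. Qed.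
Lemma mxdD (x y : 'M[A]_n) : map_mx d (x + y) = map_mx d x + map_mx d y.
Proof. by apply/matrixP => i j; rewrite !mxE raddfD. Qed.
Lemma mxdN (x : 'M[A]_n) : map_mx d (- x) = - map_mx d x.
Proof. by apply/matrixP => i j; rewrite !mxE raddfN. Qed.
Lemma mxd_sum (N : nat) (F : 'I_N -> 'M[A]_n) :
  map_mx d (\sum_(i < N) F i) = \sum_(i < N) map_mx d (F i).
Proof. by apply/matrixP => i j; rewrite !mxE !summxE raddf_sum; apply: eq_bigr => l _; rewrite mxE. Qed.
Lemma mxdM (x y : 'M[A]_n) : derivation d ->
  map_mx d (x *m y) = map_mx d x *m y + x *m map_mx d y.
Proof.
move=> hd; apply/matrixP => i j; rewrite !mxE raddf_sum -big_split; apply: eq_bigr => l _.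
by rewrite hd !mxE.
Qed.
End Mx.

Section Ops.
Variables (A : comPzRingType) (n : nat).
Local Notation S := (ser A n).
Implicit Types (s t u : S).

Lemma addE s t k : (s + t) k = s k + t k. Proof. by []. Qed.
Lemma oppE s k : (- s) k = - s k. Proof. by []. Qed.
Lemma subE s t k : (s - t) k = s k - t k. Proof. by []. Qed.
Lemma zeroE k : (0 : S) k = 0. Proof. by []. Qed.
Lemma mulE s t : s * t = smul s t. Proof. by []. Qed.
Lemma oneE k : (1 : S) k = if k == 0 then 1%:M else 0. Proof. by []. Qed.

Definition sdiff (d : {additive A -> A}) s : S.
Proof. refine (@Ser _ _ (fun k => map_mx d (s k)) _); exists (lb s) => k hk.
by rewrite lbP // mxd0. Defined.
Lemma sdiffE d s k : sdiff d s k = map_mx d (s k). Proof. by []. Qed.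
Lemma sdiffB d s t : sdiff d (s - t) = sdiff d s - sdiff d t.
Proof. by apply: ser_ext => k; rewrite /= mxdB. Qed.

Definition strunc s : S.
Proof. refine (@Ser _ _ (fun k => if k <= -1 then s k else 0) _); exists (lb s) => k hk.
by case: ifP => // _; rewrite lbP. Defined.
Lemma struncE s k : strunc s k = if k <= -1 then s k else 0. Proof. by []. Qed.
Lemma struncB s t : strunc (s - t) = strunc s - strunc t.
Proof. by apply: ser_ext => k; rewrite /=; case: ifP => _ //; rewrite subr0. Qed.
End Ops.

HB.instance Definition _ A n d := GRing.isZmodMorphism.Build (ser A n) (ser A n)
  (@sdiff A n d) (@sdiffB A n d).
HB.instance Definition _ A n := GRing.isZmodMorphism.Build (ser A n) (ser A n)
  (@strunc A n) (@struncB A n).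

Section Ops2.
Variables (A : comPzRingType) (n : nat).
Local Notation S := (ser A n).
Implicit Types (s t u : S).

Lemma sdiffM (d : {additive A -> A}) : derivation d -> isder (sdiff d : {additive S -> S}).
Proof.
move=> hd s t; apply: ser_ext => k.
rewrite addE sdiffE !mulE.
rewrite (smulW k (@lbP _ _ s) (@lbP _ _ t)).
have hs : forall m, m < lb s -> sdiff d s m = 0 by move=> m hm; rewrite sdiffE lbP ?mxd0.
have ht : forall m, m < lb t -> sdiff d t m = 0 by move=> m hm; rewrite sdiffE lbP ?mxd0.
rewrite (smulW k hs (@lbP _ _ t)) (smulW k (@lbP _ _ s) ht) -isumD /isum mxd_sum.
by apply: eq_bigr => j _; rewrite /cmul !sdiffE mxdM.
Qed.

Lemma sdiff_comm (d1 d2 : {additive A -> A}) : (forall x : A, d1 (d2 x) = d2 (d1 x)) ->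
  forall s, sdiff d1 (sdiff d2 s) = sdiff d2 (sdiff d1 s).
Proof. by move=> h s; apply: ser_ext => k; apply/matrixP => i j; rewrite !sdiffE !mxE h. Qed.

Lemma strunc_sdiff d s : strunc (sdiff d s) = sdiff d (strunc s).
Proof. by apply: ser_ext => k; rewrite struncE !sdiffE struncE; case: ifP; rewrite ?mxd0. Qed.

Lemma strunc_lb s m : m < lb s -> strunc s m = 0.
Proof. by move=> hm; rewrite struncE lbP //; case: ifP. Qed.

Lemma strunc_NN s t : strunc (strunc s * strunc t) = strunc s * strunc t.
Proof.
apply: ser_ext => k; rewrite struncE; case: ifP => // hk; symmetry.
rewrite mulE (smulW k (@strunc_lb s) (@strunc_lb t)); apply: isum0 => m.
rewrite /cmul !struncE; case: ifP => hm; last by rewrite mul0mx.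
by rewrite ifF ?mulmx0 //; lia.
Qed.

Lemma strunc_QQ s t : strunc ((s - strunc s) * (t - strunc t)) = 0.
Proof.
apply: ser_ext => k; rewrite struncE zeroE; case: ifP => // hk.
have hb : forall u : S, forall m, m < lb u -> (u - strunc u) m = 0.
  by move=> u m hm; rewrite subE strunc_lb // lbP // subrr.
rewrite mulE (smulW k (hb s) (hb t)); apply: isum0 => m.
rewrite /cmul !subE !struncE; case: ifP => hm; first by rewrite subrr mul0mx.
by rewrite ifT ?subrr ?mulmx0 //; lia.
Qed.

Lemma isum_rev (V : zmodType) (u : int -> V) a N c :
  isum u a N = isum (fun m => u (c - m)) (c - a - N%:Z + 1) N.
Proof.
rewrite /isum (reindex_inj rev_ord_inj); apply: eq_bigr => j _ /=.
congr u; have := ltn_ord j; lia.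
Qed.

Lemma diag_mulE (X Y : 'M[A]_n) i j : is_diag_mx X -> (X *m Y) i j = X i i * Y i j.
Proof.
move=> /is_diag_mxP h; rewrite mxE (bigD1 i) //= big1 ?addr0 // => l hl.
by rewrite h ?mul0r //; apply: contraNneq hl => e; apply/eqP/val_inj.
Qed.
Lemma mul_diagE (X Y : 'M[A]_n) i j : is_diag_mx X -> (Y *m X) i j = Y i j * X j j.
Proof.
move=> /is_diag_mxP h; rewrite mxE (bigD1 j) //= big1 ?addr0 // => l hl.
by rewrite h ?mulr0 //; apply: contraNneq hl => e; apply/eqP/val_inj.
Qed.
Lemma diag_comm (X Y : 'M[A]_n) : is_diag_mx X -> is_diag_mx Y -> X *m Y = Y *m X.
Proof.
move=> hX hY; apply/matrixP => i j; rewrite diag_mulE // mul_diagE //.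
case: (eqVneq i j) => [->|hij]; first by rewrite mulrC.
have e : Y i j = 0 by move/is_diag_mxP: hY; apply; rewrite (inj_eq val_inj).
by rewrite e mulr0 mul0r.
Qed.

Lemma sdiag_comm s t : (forall k, is_diag_mx (s k)) -> (forall k, is_diag_mx (t k)) ->
  s * t = t * s.
Proof.
move=> hs ht; apply: ser_ext => k; rewrite !mulE.
rewrite (smulW k (@lbP _ _ s) (@lbP _ _ t)) (smulW k (@lbP _ _ t) (@lbP _ _ s)).
rewrite (isum_rev _ _ _ k) (@isum_eq _ _ (cmul t s k)); last first.
  by move=> m; rewrite /cmul diag_comm // opprB addrC subrK.
apply: isum_win.
- move=> m hm; rewrite /cmul.
  case: (ltP m (lb t)) => h; first by rewrite lbP ?mul0mx.
  by rewrite (@lbP _ _ s) ?mulmx0 //; lia.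
- move=> m hm; rewrite /cmul.
  case: (ltP m (lb t)) => h; first by rewrite lbP ?mul0mx.
  by rewrite (@lbP _ _ s) ?mulmx0 //; lia.
Qed.
End Ops2.

Section Fin.
Variables (A : comPzRingType) (n : nat).
Local Notation S := (ser A n).
Implicit Types (s t : S).

Lemma smul_entry_single s t k m0 i j :
  (forall m, m != m0 -> (s m *m t (k - m)) i j = 0) ->
  (s * t) k i j = (s m0 *m t (k - m0)) i j.
Proof.
move=> h; rewrite mulE (smulW k (@lbP _ _ s) (@lbP _ _ t)) /isum summxE.
have hs := @smulW_supp _ _ s t k _ _ (@lbP _ _ s) (@lbP _ _ t).
change (isum (fun m => cmul s t k m i j) (lb s) (absz (k - lb s - lb t)%R).+1 =
   (s m0 *m t (k - m0)) i j).
apply: (isum_single (m0 := m0)) => //.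
by move=> m hm; rewrite hs ?mxE.
Qed.

Lemma diag_induct (h : 'I_n -> S) (d : 'I_n -> {additive A -> A}) (Z : S) :
 (forall a k, is_diag_mx (h a k)) -> (forall a k, k < -1 -> h a k = 0) ->
 (forall D, is_diag_mx D -> exists c : 'I_n -> A, D = \sum_(a < n) c a *: h a (-1)) ->
 (forall a k, is_diag_mx ((br (h a) Z + sdiff (d a) Z) k)) ->
 forall k, is_diag_mx (Z k).
Proof.
move=> hd hlow hspan hZ.
suff H : forall j : nat, forall k, k < lb Z + j%:Z ->
    forall i l : 'I_n, i != l :> nat -> Z k i l = 0.
  move=> k; apply/is_diag_mxP => i l hil; apply: (H (absz (k - lb Z)%R).+1 k) => //; lia.
elim => [|j IH] k hk i l hil.
  by rewrite lbP ?mxE //; lia.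
case: (ltP k (lb Z + j%:Z)) => hk'; first exact: IH.
have hil' : i != l by apply: contra_neq hil => ->.
have e : forall a, (h a (-1) i i - h a (-1) l l) * Z k i l = 0.
  move=> a; move/is_diag_mxP: (hZ a (k - 1)) => /(_ i l hil).
  rewrite addE /br subE !mxE.
  rewrite (smul_entry_single (m0 := -1)); last first.
    move=> m hm; rewrite diag_mulE; last exact: hd.
    case: (ltgtP m (-1)) => hm'; first by rewrite hlow ?mxE ?mul0r.
      by rewrite IH ?mulr0 //; lia.
    by rewrite hm' eqxx in hm.
  rewrite (smul_entry_single (m0 := k)); last first.
    move=> m hm; rewrite mul_diagE; last exact: hd.
    case: (ltgtP m k) => hm'; first by rewrite IH ?mul0r //; lia.
      by rewrite hlow ?mxE ?mulr0 //; lia.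
    by rewrite hm' eqxx in hm.
  rewrite diag_mulE ?hd // mul_diagE ?hd //.
  have -> : k - 1 - -1 = k by lia.
  have -> : k - 1 - k = -1 by lia.
  rewrite (IH (k - 1)) ?raddf0 ?addr0 //; last by lia.
  by rewrite mulrBl [Z k i l * _]mulrC.
have hdel : is_diag_mx (delta_mx i i : 'M[A]_n).
  apply/is_diag_mxP => p q hpq; rewrite mxE.
  case: (eqVneq p i) => [ep|]; case: (eqVneq q i) => [eq|] //=.
  by move: hpq; rewrite ep eq eqxx.
have [c hc] := hspan _ hdel.
have ent : forall p, \sum_(a < n) c a * h a (-1) p p = (delta_mx i i : 'M[A]_n) p p.
  by move=> p; rewrite hc summxE; apply: eq_bigr => a _; rewrite mxE.
have h1 := ent i; have h0 := ent l.
rewrite mxE eqxx /= in h1; have hli : (l == i) = false by apply/negbTE; rewrite eq_sym.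
rewrite mxE hli /= in h0.
transitivity ((\sum_(a < n) c a * h a (-1) i i - \sum_(a < n) c a * h a (-1) l l) * Z k i l).
  by rewrite h1 h0 subr0 mul1r.
rewrite -sumrB mulr_suml big1 // => a _; by rewrite -mulrBr -mulrA e mulr0.
Qed.
End Fin.

Section Conv.
Variables (A : comPzRingType) (n : nat).
Local Notation S := (ser A n).
Implicit Types (f g : lser A n).

Definition ofL f : S.
Proof. refine (@Ser _ _ (lc f) _); exists (lv f); exact: lvP. Defined.
Lemma ofLE f k : ofL f k = f k. Proof. by []. Qed.
Lemma ofL_lseq f g : lseq f g -> ofL f = ofL g.
Proof. by move=> h; apply: ser_ext => k; exact: h. Qed.
Lemma ofL_add f g : ofL (ladd f g) = ofL f + ofL g. Proof. by apply: ser_ext. Qed.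
Lemma ofL_opp f : ofL (lopp f) = - ofL f. Proof. by apply: ser_ext. Qed.
Lemma ofL_sub f g : ofL (lsub f g) = ofL f - ofL g. Proof. by apply: ser_ext. Qed.
Lemma ofL_mul f g : ofL (lmul f g) = ofL f * ofL g.
Proof.
apply: ser_ext => k; rewrite mulE (smulW k (a := lv f) (b := lv g)) //; exact: lvP.
Qed.
Lemma ofL_diff d f : ofL (ldiff d f) = sdiff d (ofL f). Proof. by apply: ser_ext. Qed.
Lemma ofL_trunc f : ofL (ltrunc f) = strunc (ofL f). Proof. by apply: ser_ext. Qed.
Lemma ofL_one : ofL (lone A n) = 1. Proof. by apply: ser_ext. Qed.
Lemma ofL_opbr d f g : ofL (opbr d f g) = br (ofL f) (ofL g) - sdiff d (ofL f).
Proof. by rewrite /opbr /lbr !(ofL_sub, ofL_mul, ofL_diff). Qed.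
Lemma ofL_opconj d f g h : ofL (opconj d f g h) = ofL g * sdiff d (ofL f) + ofL g * ofL h * ofL f.
Proof. by rewrite /opconj !(ofL_add, ofL_mul, ofL_diff). Qed.
End Conv.

Unset Implicit Arguments.
Theorem mainTheorem9 (A : comPzRingType) (n : nat)
  (dx : 'I_n -> {additive A -> A}) (D1 D2 : {additive A -> A})
  (hdx : forall a, derivation (dx a))
  (hD1 : derivation D1) (hD2 : derivation D2)
  (hdxdx : forall a b (u : A), dx a (dx b u) = dx b (dx a u))
  (hD1dx : forall a (u : A), D1 (dx a u) = dx a (D1 u))
  (hD2dx : forall a (u : A), D2 (dx a u) = dx a (D2 u))
  (C : 'I_n -> 'M[A]_n)
  (hcomm : forall a b k, opcomm (dx a) (dx b) (Lpot (C a)) (Lpot (C b)) k = 0)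
  (T Tinv : lser A n) (hT : dressing dx C T Tinv)
  (b1 b2 : lser A n)
  (hb1diag : forall k, is_diag_mx (b1 k)) (hb2diag : forall k, is_diag_mx (b2 k))
  (hb1x : forall a k, ldiff (dx a) b1 k = 0) (hb2x : forall a k, ldiff (dx a) b2 k = 0)
  (hb1t : forall k, ldiff D1 b1 k = 0 /\ ldiff D2 b1 k = 0)
  (hb2t : forall k, ldiff D1 b2 k = 0 /\ ldiff D2 b2 k = 0)
  (hflow1 : forall a, lseq (lmono (-1) (- map_mx D1 (C a)))
                (opbr (dx a) (ltrunc (lmul (lmul T b1) Tinv)) (Lpot (C a))))
  (hflow2 : forall a, lseq (lmono (-1) (- map_mx D2 (C a)))
                (opbr (dx a) (ltrunc (lmul (lmul T b2) Tinv)) (Lpot (C a)))) :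
  forall a, map_mx D1 (map_mx D2 (C a)) = map_mx D2 (map_mx D1 (C a)).
Proof.
move=> a0.
case: hT => _ [_ [hTTi [hTiT [h [hh [hhd [hhlow hspan]]]]]]].
pose Tt := ofL T; pose Ti := ofL Tinv; pose B1 := ofL b1; pose B2 := ofL b2.
pose X a := ofL (Lpot (C a)).
pose N1 := strunc (Tt * B1 * Ti); pose N2 := strunc (Tt * B2 * Ti).
have eTTi : Tt * Ti = 1 by rewrite -ofL_mul -ofL_one; apply: ofL_lseq.
have eTiT : Ti * Tt = 1 by rewrite -ofL_mul -ofL_one; apply: ofL_lseq.
have hh' : forall a, ofL (h a) = Ti * sdiff (dx a) Tt + Ti * X a * Tt.
  by move=> a; rewrite -(ofL_lseq (hh a)) ofL_opconj.
have flow : forall (D : {additive A -> A}) (b : lser A n),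
   (forall a, lseq (lmono (-1) (- map_mx D (C a)))
                (opbr (dx a) (ltrunc (lmul (lmul T b) Tinv)) (Lpot (C a)))) ->
   forall a, sdiff D (X a) = br (strunc (Tt * ofL b * Ti)) (X a)
                              - sdiff (dx a) (strunc (Tt * ofL b * Ti)).
  move=> D b hf a; have := ofL_lseq (hf a); rewrite ofL_opbr ofL_trunc !ofL_mul => <-.
  apply: ser_ext => k; rewrite sdiffE !ofLE /=; case: eqP => _; by rewrite ?mxdN ?mxd0.
have key : forall (D : {additive A -> A}) (N : ser A n), derivation D ->
    (forall a u, D (dx a u) = dx a (D u)) ->
    (forall a, sdiff D (X a) = br N (X a) - sdiff (dx a) N) ->
    forall B : ser A n, (forall k, is_diag_mx (B k)) -> sdiff D B = 0 ->
    sdiff D (Tt * B * Ti) = br N (Tt * B * Ti).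
  move=> D N hD hDdx hfl B hBd hB0.
  have hZd : forall k, is_diag_mx ((Ti * sdiff D Tt - Ti * N * Tt) k).
    apply: (diag_induct (h := fun a => ofL (h a)) (d := dx)) => //.
    move=> a k.
    have := conj_main eTTi eTiT (sdiffM hD) (sdiffM (hdx a)) (sdiff_comm (hDdx a)) (hfl a).
    rewrite -hh' => <-.
    apply/is_diag_mxP => i j hij; rewrite sdiffE mxE.
    by move/is_diag_mxP: (hhd a k) => ->; rewrite ?raddf0.
  exact: (step2 eTTi eTiT (sdiffM hD) hB0 (sdiag_comm hZd hBd)).
have hfl1 := flow D1 b1 hflow1; have hfl2 := flow D2 b2 hflow2.
have hB1D2 : sdiff D2 B1 = 0 by apply: ser_ext => k; exact: (hb1t k).2.
have hB2D1 : sdiff D1 B2 = 0 by apply: ser_ext => k; exact: (hb2t k).1.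
have hM1 := key D2 N2 hD2 hD2dx hfl2 B1 hb1diag hB1D2.
have hM2 := key D1 N1 hD1 hD1dx hfl1 B2 hb2diag hB2D1.
have eM : forall x y : ser A n, y + (x - y) = x by move=> x y; rewrite addrC subrK.
have hK : sdiff D2 N1 = sdiff D1 N2 + br N2 N1.
  rewrite /N1 /N2 -!strunc_sdiff hM1 hM2 -/N1 -/N2.
  have := @keyK _ _ N1 N2 (Tt * B1 * Ti - N1) (Tt * B2 * Ti - N2) _
     (strunc_NN _ _) (strunc_NN _ _) (strunc_QQ _ _) (strunc_QQ _ _).
  rewrite !eM; apply.
  have hB12 : B1 * B2 = B2 * B1 := @sdiag_comm _ _ B1 B2 hb1diag hb2diag.
  move: eTiT hB12; clearbody Tt Ti B1 B2 => eTiT hB12.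
  rewrite !mulrA -[Tt * B1 * Ti * Tt](mulrA _ Ti Tt) -[Tt * B2 * Ti * Tt](mulrA _ Ti Tt) eTiT !mulr1.
  by rewrite -(mulrA Tt B1) hB12 mulrA.
have := step3 (sdiffM hD1) (sdiffM hD2) (sdiffM (hdx a0)) (sdiff_comm (hD1dx a0))
   (sdiff_comm (hD2dx a0)) (hfl1 a0) (hfl2 a0) hK.
move/(congr1 (fun s : ser A n => s (-1))); rewrite !sdiffE ofLE /= ?eqxx !mxdN.
by move/oppr_inj.
Qed.
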